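(* Let $T$ be a finite tree with at least one edge, and let $r\ge1$, $s\ge1$ be integers. There is a bijection between partitions of the vertex set of $T$ into $r+1$ non-empty parts, each $(s+1)$-scattered, and partitions of the edge set of $T$ into $r$ non-empty parts, each $s$-scattered.
   Context: For distinct vertices $v,w$ of a tree, their distance is the number of edges on the unique path between them. For distinct edges $e,e'$, their distance is $p-1$, where $e=e_1,e_2,\dots,e_p=e'$ is the shortest sequence of edges in which consecutive edges share a vertex (so two edges sharing a vertex have distance $1$). A set of vertices (resp. edges) is $s$-scattered if any two distinct elements have distance $\ge s$. *)

(* Defs.v *)
From mathcomp Require Import all_boot.
Set Implicit Arguments. Unset Strict Implicit. Unset Printing Implicit Defensive.

(* A finite simple graph on the finType T is a symmetric irreflexive relation
   e : rel T.  A walk from x to y of length n is a sequence p with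
   path e x p, last x p = y and size p = n (n edges). *)

Definition simple_path {T : finType} (e : rel T) (x y : T) (p : seq T) : bool :=
  [&& path e x p, last x p == y & uniq (x :: p)].

Definition is_tree {T : finType} (e : rel T) : Prop :=
  [/\ symmetric e, irreflexive e,
      (forall x y : T, exists p, simple_path e x y p) &
      (forall (x y : T) p q, simple_path e x y p -> simple_path e x y q -> p = q)].

Definition is_edge {T : finType} (e : rel T) (A : {set T}) : bool :=
  [exists x, [exists y, e x y && (A == [set x; y])]].

Definition edge_t {T : finType} (e : rel T) := {A : {set T} | is_edge e A}.

Definition edge_adj (T : finType) (e : rel T) : rel (edge_t e) :=
  fun a b => (val a :&: val b) != set0.

(* For a relation R, "the distance between distinct a, b is >= s": every
   R-sequence a = a_0, a_1, ..., a_n = b has n >= s.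
   - with R = e this is vertex distance (number of edges of the path);
   - with R = edge_adj e, n = p-1 for the edge sequence e_1,...,e_p,
     which is exactly the edge distance of the paper. *)
Definition dist_ge {X : finType} (R : rel X) (s : nat) (a b : X) : Prop :=
  forall p : seq X, path R a p -> last a p = b -> s <= size p.

Definition scattered {X : finType} (R : rel X) (s : nat) (A : {set X}) : Prop :=
  forall a b, a \in A -> b \in A -> a != b -> dist_ge R s a b.

(* Partitions of the vertex set into k nonempty parts, each (s)-scattered.
   (mathcomp's [partition P D] already forces all parts to be nonempty.) *)
Definition vpart {T : finType} (e : rel T) (k s : nat) (P : {set {set T}}) : Prop :=
  [/\ partition P [set: T], #|P| = k & forall A, A \in P -> scattered e s A].

Definition epart {T : finType} (e : rel T) (k s : nat)
    (Q : {set {set edge_t e}}) : Prop :=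
  [/\ partition Q [set: edge_t e], #|Q| = k &
      forall A, A \in Q -> scattered (@edge_adj T e) s A].

(* Main.v *)
Require Import Defs.
From mathcomp Require Import all_boot.
From mathcomp Require Import zify.
From Stdlib Require Import ProofIrrelevance.
Set Implicit Arguments. Unset Strict Implicit. Unset Printing Implicit Defensive.

Section Count.
Variables (X : finType) (near : rel X).
Hypothesis near_sym : symmetric near.

Definition indep (B : {set X}) :=
  [forall a in B, forall b in B, (a != b) ==> ~~ near a b].
Definition parts (S : {set X}) k := [set P : {set {set X}} |
  [&& partition P S, #|P| == k & [forall B in P, indep B]]].

Lemma indepP (B : {set X}) : reflect (forall a b, a \in B -> b \in B -> a != b -> ~~ near a b)
  (indep B).
Proof.
apply: (iffP forallP) => [H a b aB bB ab| H a]; last first.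
  apply/implyP => aB; apply/forallP => b; apply/implyP => bB; apply/implyP; exact: H.
by move: (H a); rewrite aB /= => /forallP/(_ b); rewrite bB ab.
Qed.

Lemma partsP (P : {set {set X}}) (S : {set X}) k : reflect
  ([/\ partition P S, #|P| = k & forall B, B \in P -> indep B]) (P \in parts S k).
Proof.
rewrite inE; apply: (iffP and3P) => [[a /eqP b /forallP c]|[a b c]]; split => //.
- by move=> B; move: (c B) => /implyP.
- by apply/eqP.
- by apply/forallP => B; apply/implyP; apply: c.
Qed.

Lemma coverP (P : {set {set X}}) z :
  reflect (exists2 B, B \in P & z \in B) (z \in cover P).
Proof. exact: bigcupP. Qed.

Lemma disjP (A B : {set X}) : reflect (forall z, z \in A -> z \notin B) [disjoint A & B].
Proof.
rewrite disjoints_subset; apply: (iffP subsetP) => H z /H; by rewrite inE.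
Qed.

Lemma partP (P : {set {set X}}) (D : {set X}) : reflect
  [/\ forall z, z \in D = (z \in cover P),
      forall A B, A \in P -> B \in P -> A != B -> forall z, z \in A -> z \notin B
    & set0 \notin P] (partition P D).
Proof.
apply: (iffP and3P) => [[/eqP cP /trivIsetP tP s0]|[cP tP s0]]; split => //.
- by move=> z; rewrite cP.
- by move=> A B AP BP AB; apply/disjP; apply: tP.
- by apply/eqP/setP => z; rewrite cP.
- by apply/trivIsetP => A B AP BP AB; apply/disjP; apply: tP.
Qed.

Lemma blockD (P : {set {set X}}) (D B : {set X}) z : partition P D -> B \in P -> z \in B -> z \in D.
Proof. by case/partP => cP _ _ BP zB; rewrite cP; apply/coverP; exists B. Qed.

Lemma block_nz (P : {set {set X}}) (D B : {set X}) : partition P D -> B \in P -> exists z, z \in B.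
Proof.
case/partP => _ _ s0 BP; case: (set_0Vmem B) => [B0|//]; subst.
by rewrite BP in s0.
by case=> z zB; exists z.
Qed.

Lemma pblockE (P : {set {set X}}) (D B : {set X}) z : partition P D -> B \in P -> z \in B -> pblock P z = B.
Proof. by case/and3P => _ tP _; apply: def_pblock. Qed.

Lemma partsA (S : {set X}) x k : x \notin S ->
  [set P in parts (x |: S) k.+1 | [set x] \in P] = [set [set x] |: Q | Q in parts S k].
Proof.
move=> xS; apply/setP => P; rewrite inE; apply/andP/imsetP.
- case=> /partsP [pP cardP iP] xP; exists (P :\ [set x]); last by rewrite setD1K.
  case/partP: pP => cP tP s0.
  apply/partsP; split.
  + apply/partP; split.
    * move=> z; apply/idP/coverP => [zS|[B /setD1P [Bx BP] zB]].
        have : z \in cover P by rewrite -cP inE zS orbT.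
        case/coverP => B BP zB; exists B => //; apply/setD1P; split => //.
        by apply: contraNneq xS => Bx; move: zB; rewrite Bx => /set1P <-.
      have := tP _ _ BP xP Bx z zB; rewrite inE => zx.
      by move: (cP z); rewrite (_ : z \in cover P) ?inE ?(negbTE zx) //; apply/coverP; exists B.
    * by move=> A B /setD1P [_ AP] /setD1P [_ BP]; apply: tP.
    * by apply: contra s0 => /setD1P [].
  + by move: cardP; rewrite (cardsD1 [set x]) xP => -[].
  + by move=> B /setD1P [_]; apply: iP.
- case=> Q /partsP [pQ cQ iQ] ->.
  have xQ : [set x] \notin Q.
    by apply/negP => /(blockD pQ)/(_ (set11 x)); rewrite (negbTE xS).
  case/partP: pQ => cP tP s0.
  split; last by rewrite setU11.
  apply/partsP; split.
  + apply/partP; split.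
    * move=> z; apply/idP/coverP => [|[B /setU1P [->|BQ] zB]].
        case/setU1P => [->|zS]; first by exists [set x]; rewrite ?setU11 ?set11.
        by move: zS; rewrite cP => /coverP [B BQ zB]; exists B; rewrite ?setU1r.
      by rewrite inE zB.
      by rewrite inE cP; apply/orP; right; apply/coverP; exists B.
    * move=> A B /setU1P [->|AQ] /setU1P [->|BQ]; rewrite ?eqxx // => AB z.
      - move=> /set1P ->; apply: contra xS => xB; rewrite cP; apply/coverP; by exists B.
      - move=> zA; apply/set1P => zx; subst; move: xS; rewrite cP => /coverP; apply; by exists A.
      - by apply: tP.
    * rewrite !inE negb_or s0 andbT; apply/eqP => /setP/(_ x); by rewrite !inE eqxx.
  + by rewrite cardsU1 xQ cQ.
  + move=> B /setU1P [->|]; last by apply: iQ.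
    by apply/indepP => a b /set1P -> /set1P ->; rewrite eqxx.
Qed.

Lemma partsA_card (S : {set X}) x k : x \notin S ->
  #|[set P in parts (x |: S) k.+1 | [set x] \in P]| = #|parts S k|.
Proof.
move=> xS; rewrite partsA // card_in_imset // => Q1 Q2 H1 H2 E.
have nQ Q : Q \in parts S k -> [set x] \notin Q.
  case/partsP => pQ _ _; apply/negP => /(blockD pQ)/(_ (set11 x)); by rewrite (negbTE xS).
by rewrite -(setU1K (nQ _ H1)) E setU1K // nQ.
Qed.


Lemma setD1_notin (A : {set X}) z : z \notin A -> A :\ z = A.
Proof. by move=> zA; apply/setP => y; rewrite !inE; case: eqP => // ->; rewrite (negbTE zA). Qed.

Lemma indepS (A B : {set X}) : A \subset B -> indep B -> indep A.
Proof.
move=> /subsetP AB /indepP iB; apply/indepP => a b aA bA; apply: iB; exact: AB.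
Qed.

Definition restr x (P : {set {set X}}) := [set B :\ x | B in P].
Definition ins x (Q : {set {set X}}) (B : {set X}) := (x |: B) |: (Q :\ B).

Section CaseB.
Variables (S : {set X}) (x : X) (k : nat).
Hypothesis xS : x \notin S.
Let N := [set y in S | near x y].

Lemma blockD1_nz P B : partition P (x |: S) -> [set x] \notin P -> B \in P ->
  exists z, z \in B :\ x.
Proof.
move=> pP xP BP; have [z zB] := block_nz pP BP.
case: (z =P x) => [zx|/eqP zx]; last by exists z; rewrite !inE zx.
case: (set_0Vmem (B :\ x)) => [B0|]; last by case=> w ?; exists w.
have : B = [set x].
  apply/setP => y; rewrite inE; apply/idP/eqP => [yB|->]; last by rewrite -zx.
  apply/eqP; apply: contraT => yx; have : y \in B :\ x by rewrite !inE yx yB.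
  by rewrite B0 inE.
by move=> E; rewrite -E BP in xP.
Qed.

Lemma restr_inj P : partition P (x |: S) -> [set x] \notin P ->
  {in P &, injective (fun B => B :\ x)}.
Proof.
move=> pP xP B1 B2 B1P B2P E; apply/eqP; apply: contraT => B12.
have [z zB] := blockD1_nz pP xP B1P.
have zB2 : z \in B2 :\ x by rewrite -E.
case/partP: pP => _ tP _; have := tP _ _ B1P B2P B12 z.
move: zB zB2; rewrite !inE => /andP [_ zB1] /andP [_ zB2].
by move/(_ zB1); rewrite zB2.
Qed.

Lemma LB1 P : P \in parts (x |: S) k.+1 -> [set x] \notin P -> restr x P \in parts S k.+1.
Proof.
move=> /partsP [pP cP iP] xP; apply/partsP; split.
- have pP' := pP; case/partP: pP' => cv tP s0; apply/partP; split.
  + move=> z; apply/idP/coverP => [zS|[C /imsetP [B BP ->] zC]].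
      have : z \in cover P by rewrite -cv inE zS orbT.
      case/coverP => B BP zB; exists (B :\ x); first by apply: imset_f.
      rewrite !inE zB andbT; by apply: contraNneq xS => <-.
    move: zC; rewrite !inE => /andP [zx zB].
    have : z \in x |: S by rewrite cv; apply/coverP; exists B.
    by rewrite !inE (negbTE zx).
  + move=> A C /imsetP [B1 B1P ->] /imsetP [B2 B2P ->] AC z.
    have B12 : B1 != B2 by apply: contraNneq AC => ->.
    rewrite !inE => /andP [_ zB1]; by rewrite negb_and (negbTE (tP _ _ B1P B2P B12 z zB1)) orbT.
  + apply/negP => /imsetP [B BP /esym B0].
    have [z] := blockD1_nz pP xP BP; by rewrite B0 inE.
- by rewrite /restr (card_in_imset (restr_inj pP xP)).
- move=> C /imsetP [B BP ->]; apply: indepS (iP _ BP); exact: subsetDl.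
Qed.

Lemma LB2 P : P \in parts (x |: S) k.+1 -> [set x] \notin P ->
  [/\ pblock P x :\ x \in restr x P, [disjoint pblock P x :\ x & N]
    & P = ins x (restr x P) (pblock P x :\ x)].
Proof.
move=> /partsP [pP cP iP] xP.
have pP' := pP; case/partP: pP' => cv tP s0.
have xc : x \in cover P by rewrite -cv setU11.
have bP := pblock_mem xc; have xb : x \in pblock P x by rewrite mem_pblock.
split.
- exact: imset_f.
- apply/disjP => z; rewrite !inE => /andP [zx zb]; apply/negP => /andP [_ nz].
  by move/indepP: (iP _ bP) => /(_ x z xb zb); rewrite eq_sym zx nz => /(_ isT).
- apply/setP => C; rewrite /ins setD1K //; apply/idP/setU1P => [CP|].
  + case: (C =P pblock P x) => [->|/eqP Cb]; [by left|right].
    have xC : x \notin C by apply: contra Cb => xC; rewrite (pblockE pP CP xC).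
    apply/setD1P; split; last by rewrite -{1}(setD1_notin xC); apply: imset_f.
    apply/eqP => E; have [z zC] := block_nz pP CP; have := tP _ _ CP bP Cb z zC.
    by move: zC; rewrite E !inE => /andP [_ ->].
  + case=> [->//|/setD1P [Cb /imsetP [B BP EC]]]; subst C.
    case: (B =P pblock P x) => [E|/eqP Bb]; first by rewrite E eqxx in Cb.
    have xB : x \notin B by apply: contra Bb => xB; rewrite (pblockE pP BP xB).
    by rewrite setD1_notin.
Qed.

Lemma LB3 Q B : Q \in parts S k.+1 -> B \in Q -> [disjoint B & N] ->
  [/\ ins x Q B \in parts (x |: S) k.+1, [set x] \notin ins x Q B,
      restr x (ins x Q B) = Q & pblock (ins x Q B) x :\ x = B].
Proof.
move=> /partsP [pQ cQ iQ] BQ dB.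
have pQ' := pQ; case/partP: pQ' => cv tQ s0.
have xC C : C \in Q -> x \notin C.
  by move=> CQ; apply: contra xS => xC; apply: (blockD pQ CQ xC).
have xB := xC _ BQ.
have xBQ : x |: B \notin Q :\ B.
  by apply/negP => /setD1P [_ /xC]; rewrite setU11.
have pI : partition (ins x Q B) (x |: S).
  apply/partP; split.
  - move=> z; apply/idP/coverP => [|[C /setU1P [->|/setD1P [CB CQ]] zC]].
    + case/setU1P => [->|]; first by exists (x |: B); rewrite ?setU11.
      rewrite cv => /coverP [C CQ zC]; case: (C =P B) => [E|/eqP CB].
        by exists (x |: B); rewrite ?setU11 // inE -E zC orbT.
      by exists C => //; rewrite /ins inE; apply/orP; right; apply/setD1P.
    + move: zC; rewrite !inE => /orP [->//|zB]; apply/orP; right.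
      by rewrite cv; apply/coverP; exists B.
    + by rewrite inE cv; apply/orP; right; apply/coverP; exists C.
  - move=> A C /setU1P [->|/setD1P [AB AQ]] /setU1P [->|/setD1P [CB CQ]];
      rewrite ?eqxx // => AC z.
    + move/setU1P => [->|zB]; first by apply: xC.
      by apply: tQ zB; rewrite // eq_sym.
    + move=> zA; apply/setU1P => -[zx|zB].
        by subst; move: zA; apply/negP; apply: xC.
      by move: (tQ _ _ AQ BQ AB z zA); rewrite zB.
    + exact: tQ.
  - rewrite !inE negb_or negb_and (negbTE s0) orbT andbT; apply/eqP => /setP/(_ x); by rewrite !inE eqxx.
have xI : x |: B \in ins x Q B by rewrite setU11.
have pbI : pblock (ins x Q B) x = x |: B by apply: (pblockE pI xI (setU11 _ _)).
split => //.
- apply/partsP; split => //.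
  + by rewrite /ins cardsU1 xBQ; move: cQ; rewrite (cardsD1 B Q) BQ.
  + move=> C /setU1P [->|/setD1P [_ CQ]]; last exact: iQ.
    apply/indepP => a b /setU1P [->|aB] /setU1P [->|bB]; rewrite ?eqxx //.
    * move=> _; apply/negP => nxb; move/disjP: dB => /(_ b bB); rewrite !inE nxb andbT.
      by rewrite (blockD pQ BQ bB).
    * move=> _; rewrite near_sym; apply/negP => nxa; move/disjP: dB => /(_ a aB).
      by rewrite !inE nxa andbT (blockD pQ BQ aB).
    * by move/indepP: (iQ _ BQ); apply.
- rewrite /ins; apply/negP => /setU1P [E|/setD1P [_ /xC]]; last by rewrite set11.
  have [z zB] := block_nz pQ BQ.
  have : z \in [set x] by rewrite E inE zB orbT.
  by move/set1P => zx; move: xB; rewrite -zx zB.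
- apply/setP => C; apply/imsetP/idP => [[D /setU1P [->|/setD1P [DB DQ]] ->]|CQ].
  + by rewrite setU1K.
  + by rewrite setD1_notin // xC.
  + case: (C =P B) => [->|/eqP CB]; first by exists (x |: B); rewrite ?setU1K.
    by exists C; rewrite ?setD1_notin ?xC //; apply/setU1P; right; apply/setD1P.
- by rewrite pbI setU1K.
Qed.


Hypothesis hcl : forall y z, y \in N -> z \in N -> y != z -> near y z.

Lemma avoid_card Q : Q \in parts S k.+1 ->
  #|[set B in Q | [disjoint B & N]]| = k.+1 - #|N|.
Proof.
move=> /partsP [pQ cQ iQ].
have pQ' := pQ; case/partP: pQ' => cv tQ s0.
have NS y : y \in N -> y \in cover Q by rewrite inE -cv => /andP [].
have EM : [set B in Q | ~~ [disjoint B & N]] = [set pblock Q y | y in N].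
  apply/setP => C; rewrite inE; apply/andP/imsetP => [[CQ]|[y yN ->]].
    rewrite -setI_eq0 => /set0Pn [y]; rewrite inE => /andP [yC yN].
    by exists y => //; rewrite (pblockE pQ CQ yC).
  split; first by apply: pblock_mem; apply: NS.
  rewrite -setI_eq0; apply/set0Pn; exists y; rewrite inE yN andbT mem_pblock.
  exact: NS.
have cM : #|[set B in Q | ~~ [disjoint B & N]]| = #|N|.
  rewrite EM card_in_imset // => y z yN zN E; apply/eqP; apply: contraT => yz.
  have yb : y \in pblock Q y by rewrite mem_pblock NS.
  have zb : z \in pblock Q y by rewrite E mem_pblock NS.
  move/indepP: (iQ _ (pblock_mem (NS _ yN))) => /(_ y z yb zb yz).
  by rewrite hcl.
have := cardsID [set B : {set X} | [disjoint B & N]] Q.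
have -> : Q :&: [set B : {set X} | [disjoint B & N]] = [set B in Q | [disjoint B & N]].
  by apply/setP => C; rewrite !inE.
have -> : Q :\: [set B : {set X} | [disjoint B & N]] = [set B in Q | ~~ [disjoint B & N]].
  by apply/setP => C; rewrite !inE andbC.
by rewrite cM cQ => <-; rewrite addnK.
Qed.

Definition PB := [set P in parts (x |: S) k.+1 | [set x] \notin P].
Lemma inPB P : (P \in PB) = (P \in parts (x |: S) k.+1) && ([set x] \notin P).
Proof. by rewrite /PB in_set. Qed.

Lemma fiber Q : Q \in parts S k.+1 ->
  [set P in PB | restr x P == Q] =
  [set ins x Q B | B in [set B in Q | [disjoint B & N]]].
Proof.
move=> QP; apply/setP => P; rewrite in_set inPB; apply/idP/imsetP.
- case/andP => /andP [PP xP] /eqP RQ.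
  have [h1 h2 h3] := LB2 PP xP.
  exists (pblock P x :\ x); last by rewrite {1}h3 RQ.
  by rewrite in_set -RQ h1 h2.
- case=> B; rewrite in_set => /andP [BQ dB] ->.
  have [h1 h2 h3 h4] := LB3 QP BQ dB.
  by rewrite h1 h2 h3 eqxx.
Qed.

Lemma fiber_card Q : Q \in parts S k.+1 ->
  #|[set P in PB | restr x P == Q]| = k.+1 - #|N|.
Proof.
move=> QP; rewrite fiber // card_in_imset ?avoid_card //.
move=> B1 B2; rewrite !in_set => /andP [B1Q d1] /andP [B2Q d2] E.
have [_ _ _ e1] := LB3 QP B1Q d1; have [_ _ _ e2] := LB3 QP B2Q d2.
by rewrite -e1 -e2 E.
Qed.

End CaseB.

Lemma count_step (S : {set X}) x k : x \notin S ->
  (forall y z, y \in [set y in S | near x y] -> z \in [set y in S | near x y] ->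
     y != z -> near y z) ->
  #|parts (x |: S) k.+1| =
  #|parts S k| + (k.+1 - #|[set y in S | near x y]|) * #|parts S k.+1|.
Proof.
move=> xS hcl.
rewrite -(cardsID [set P : {set {set X}} | [set x] \in P]) -(partsA_card k xS).
have -> : parts (x |: S) k.+1 :&: [set P : {set {set X}} | [set x] \in P] =
          [set P in parts (x |: S) k.+1 | [set x] \in P].
  by apply/setP => P; rewrite !inE.
have -> : parts (x |: S) k.+1 :\: [set P : {set {set X}} | [set x] \in P] = PB S x k.
  by apply/setP => P; rewrite !inE andbC.
congr (_ + _).
rewrite -sum1_card (partition_big (restr x) (fun Q => Q \in parts S k.+1)); last first.
  by move=> P; rewrite inPB => /andP [PP xP]; apply: LB1.
rewrite mulnC -sum_nat_const; apply: eq_bigr => Q QP.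
rewrite -(fiber_card xS hcl QP) -sum1_card; apply: eq_bigl => P.
by rewrite in_set.
Qed.

End Count.

Lemma parts_set0 (X : finType) (near : rel X) k :
  #|parts near (set0 : {set X}) k| = (k == 0).
Proof.
case: k => [|k].
  have -> : parts near set0 0 = [set set0].
    apply/setP => P; rewrite !inE; apply/and3P/eqP => [[pP /eqP cP _]|->].
      by apply/eqP; rewrite -cards_eq0 cP.
    split; [by rewrite partition_set0 | by rewrite cards0 | by apply/forallP => B; rewrite inE].
  by rewrite cards1.
have -> : parts near set0 k.+1 = set0.
  apply/setP => P; rewrite !inE; apply/negP => /and3P [pP cP _].
  by move: pP; rewrite partition_set0 => /eqP P0; rewrite P0 cards0 in cP.
by rewrite cards0.
Qed.

Lemma parts0 (X : finType) (near : rel X) (S : {set X}) :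
  S != set0 -> #|parts near S 0| = 0.
Proof.
move=> Sn; apply/eqP; rewrite cards_eq0; apply/eqP/setP => P; rewrite !inE.
apply/negP => /and3P [pP /eqP cP _]; move: pP; rewrite (cards0_eq cP).
by move/cover_partition; rewrite /cover big_set0 => S0; rewrite -S0 eqxx in Sn.
Qed.

Section Tree.
Variables (T : finType) (e : rel T).
Hypothesis hT : is_tree e.
Variable rt : T.

Lemma tsym : symmetric e. Proof. by case: hT. Qed.
Lemma tirr : irreflexive e. Proof. by case: hT. Qed.
Lemma tconn x y : exists p, simple_path e x y p. Proof. by case: hT. Qed.
Lemma tuniq x y p q : simple_path e x y p -> simple_path e x y q -> p = q.
Proof. by case: hT => _ _ _; apply. Qed.

Definition Pth x := xchoose (tconn rt x).
Lemma Pth_spec x : simple_path e rt x (Pth x).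
Proof. exact: (xchooseP (tconn rt x)). Qed.
Lemma PthE x q : simple_path e rt x q -> Pth x = q.
Proof. by move=> h; apply: tuniq h; apply: Pth_spec. Qed.

Definition par x := last rt (belast rt (Pth x)).
Definition dep x := size (Pth x).

Lemma Pth_rt : Pth rt = [::].
Proof. by apply: PthE; rewrite /simple_path /= eqxx. Qed.
Lemma dep_rt : dep rt = 0. Proof. by rewrite /dep Pth_rt. Qed.
Lemma par_rt : par rt = rt. Proof. by rewrite /par Pth_rt. Qed.
Lemma dep0 x : dep x = 0 -> x = rt.
Proof.
rewrite /dep => /size0nil h; have := Pth_spec x; rewrite /simple_path h /=.
by case/andP => /eqP.
Qed.
Lemma dep_gt0 x : x != rt -> 0 < dep x.
Proof. by move=> xr; rewrite lt0n; apply: contra xr => /eqP/dep0 ->. Qed.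

Lemma Pth_par x : x != rt -> Pth x = rcons (Pth (par x)) x.
Proof.
move=> xr; have := Pth_spec x; rewrite /par.
case/lastP E: (Pth x) => [|q y].
  by rewrite /simple_path /= => /andP [/eqP xr']; rewrite xr' eqxx in xr.
rewrite /simple_path rcons_path last_rcons -rcons_cons rcons_uniq.
case/and3P => /andP [pq _] /eqP yx /andP [_ uq]; subst y.
rewrite belast_rcons /=; congr rcons; apply/esym/PthE.
by rewrite /simple_path pq eqxx uq.
Qed.

Lemma dep_par x : dep (par x) = (dep x).-1.
Proof.
case: (x =P rt) => [->|/eqP xr]; first by rewrite par_rt dep_rt.
by rewrite {2}/dep (Pth_par xr) size_rcons.
Qed.

Lemma e_par x : x != rt -> e (par x) x.
Proof.
move=> xr; have := Pth_spec x; rewrite (Pth_par xr) /simple_path rcons_path.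
case/and3P => /andP [_ h] _ _; move: h.
by have := Pth_spec (par x); case/and3P => _ /eqP ->.
Qed.

Lemma par_neq x : x != rt -> par x != x.
Proof.
move=> xr; apply/eqP => E; have := dep_par x; rewrite E; have := dep_gt0 xr; lia.
Qed.

Lemma e_cases_aux a b q : simple_path e rt b q -> e a b ->
  (b != rt /\ a = par b) \/ (a != rt /\ b = par a).
Proof.
move=> sq eab; have Eq := PthE sq.
move: sq Eq; rewrite /simple_path => /and3P [pb lb ub].
case: (boolP (a \in rt :: q)) => [aP|aP] Eq.
- left; move: pb lb ub Eq; case/splitPl: aP => p1 p2 la pb lb ub Eq.
  have s2 : simple_path e a b p2.
    move: pb lb ub; rewrite /simple_path cat_path last_cat la -cat_cons cat_uniq.
    case/andP => _ -> -> /and3P [_ h u2] /=.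
    rewrite u2 andbT; apply: contra h => ap2; apply/hasP; exists a => //.
    by rewrite -la mem_last.
  have s1 : simple_path e a b [:: b].
    by rewrite /simple_path /= eab eqxx /= inE andbT; apply: contraTneq eab => ->; rewrite tirr.
  have E2 := tuniq s2 s1; subst p2.
  have br : b != rt.
    by apply/eqP => E; move: Eq; rewrite E Pth_rt; case: p1 {pb lb ub la}.
  by split => //; rewrite /par Eq cats1 belast_rcons /= la.
- right; have sa : simple_path e rt a (rcons q a).
    have u : uniq (rcons (rt :: q) a) by rewrite rcons_uniq aP ub.
    rewrite rcons_cons in u.
    by rewrite /simple_path rcons_path pb last_rcons eqxx (eqP lb) tsym eab u.
  split; first by apply: contra aP => /eqP ->; rewrite inE eqxx.
  by rewrite /par (PthE sa) belast_rcons /= (eqP lb).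
Qed.

Lemma e_cases a b : e a b -> (b != rt /\ a = par b) \/ (a != rt /\ b = par a).
Proof. exact: e_cases_aux (Pth_spec b). Qed.

Lemma dep_iter i x : dep (iter i par x) = dep x - i.
Proof. elim: i => [|i IH]; first by rewrite subn0. by rewrite iterS dep_par IH subnS. Qed.

Lemma iter_rt i x : (iter i par x == rt) = (dep x <= i).
Proof.
apply/eqP/idP => [E|h].
  by move: (dep_iter i x); rewrite E dep_rt; lia.
by apply: dep0; rewrite dep_iter; lia.
Qed.

Definition WV n a b := exists q, [&& path e a q, last a q == b & size q <= n].
Definition Wit (n : nat) a b := exists i j, iter i par a = iter j par b /\ i + j <= n.

Lemma WV_Wit n a b : WV n a b -> Wit n a b.
Proof.
case=> q; elim: q a n => [|c q IH] a n /and3P [pq /eqP lq sq].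
  by exists 0, 0; rewrite /= -lq.
move: pq lq => /= /andP [eac pq] lq.
have [i [j [E ij]]] : Wit n.-1 c b by apply: IH; rewrite pq lq eqxx /=; move: sq => /=; lia.
move: sq => /= sq.
case: (e_cases eac) => [[cr ac]|[ar ca]].
- case: i E ij => [|i] E ij.
    by exists 0, j.+1; split; [rewrite /= ac; move: E => /= ->|lia].
  by exists i, j; split; [rewrite ac -iterSr|lia].
- by exists i.+1, j; split; [rewrite iterSr -ca|lia].
Qed.

Lemma WV_trans m n a b c : WV m a b -> WV n b c -> WV (m + n) a c.
Proof.
case=> q1 /and3P [p1 /eqP l1 s1] [q2 /and3P [p2 /eqP l2 s2]].
exists (q1 ++ q2); rewrite cat_path p1 l1 p2 last_cat l1 l2 eqxx size_cat /=; lia.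
Qed.
Lemma WV_mono m n a b : m <= n -> WV m a b -> WV n a b.
Proof. by move=> mn [q /and3P [p l sq]]; exists q; rewrite p l /=; lia. Qed.
Lemma WV1 a b : e a b -> WV 1 a b.
Proof. by move=> eab; exists [:: b]; rewrite /= eab eqxx. Qed.
Lemma WV0 a : WV 0 a a.
Proof. by exists [::]; rewrite /= eqxx. Qed.
Lemma WV_sym n a b : WV n a b -> WV n b a.
Proof.
case=> q /and3P [pq /eqP lq sq]; rewrite -lq; apply: WV_mono sq _.
elim: q a {lq} pq => [|c q IH] a /=; first by move=> _; apply: WV0.
case/andP => eac pq; rewrite -addn1; apply: WV_trans (IH _ pq) _.
by apply: WV1; rewrite tsym.
Qed.

Lemma WV_up i a : i <= dep a -> WV i a (iter i par a).
Proof.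
elim: i => [|i IH] h; first exact: WV0.
rewrite -addn1; apply: WV_trans (IH (ltnW h)) _; apply: WV1.
rewrite addn1 iterS tsym e_par // iter_rt; lia.
Qed.

Lemma norm_wit a b i j : iter i par a = iter j par b ->
  exists i' j', [/\ i' <= i, j' <= j, i' <= dep a, j' <= dep b
                & iter i' par a = iter j' par b].
Proof.
move=> E.
have ra : iter (dep a) par a = rt by apply/eqP; rewrite iter_rt.
have rb : iter (dep b) par b = rt by apply/eqP; rewrite iter_rt.
case: (leqP i (dep a)) => hi; case: (leqP j (dep b)) => hj.
- by exists i, j.
- have : iter j par b == rt by rewrite iter_rt; lia.
  rewrite -E iter_rt => ha.
  by exists (dep a), (dep b); split; rewrite ?ra ?rb //; lia.
- have : iter i par a == rt by rewrite iter_rt; lia.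
  rewrite E iter_rt => hb.
  by exists (dep a), (dep b); split; rewrite ?ra ?rb //; lia.
- by exists (dep a), (dep b); split; rewrite ?ra ?rb //; lia.
Qed.

Lemma Wit_WV n a b : Wit n a b -> WV n a b.
Proof.
case=> i [j [E ij]]; have [i' [j' [h1 h2 h3 h4 E']]] := norm_wit E.
apply: (@WV_mono (i' + j')); first lia.
apply: WV_trans (WV_up h3) _; rewrite E'; apply: WV_sym; exact: WV_up.
Qed.


Definition nearV (s : nat) : rel T := fun a b =>
  [exists i : 'I_s.+1, exists j : 'I_s.+1, (i + j <= s) && (iter i par a == iter j par b)].

Lemma nearVP s a b : reflect (Wit s a b) (nearV s a b).
Proof.
apply: (iffP existsP) => [[i /existsP [j /andP [h /eqP E]]]|[i [j [E h]]]].
  by exists i, j.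
have hi : i < s.+1 by lia.
have hj : j < s.+1 by lia.
by exists (Ordinal hi); apply/existsP; exists (Ordinal hj); rewrite /= h E eqxx.
Qed.

Lemma nearV_sym s : symmetric (nearV s).
Proof.
move=> a b; apply/nearVP/nearVP => -[i [j [E h]]]; exists j, i; split => //; lia.
Qed.

Lemma scatV s A : scattered e s.+1 A <-> indep (nearV s) A.
Proof.
split => H.
- apply/indepP => a b aA bA ab; apply/negP => /nearVP /Wit_WV [q /and3P [pq /eqP lq sq]].
  by have := H a b aA bA ab q pq lq; lia.
- move=> a b aA bA ab q pq lq; rewrite ltnNge; apply/negP => sq.
  move/indepP: H => /(_ a b aA bA ab) /nearVP; apply; apply: WV_Wit.
  by exists q; rewrite pq lq eqxx sq.
Qed.

Variable f0 : edge_t e.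
Definition eps z : edge_t e := insubd f0 [set par z; z].

Lemma eps_val z : z != rt -> val (eps z) = [set par z; z].
Proof.
move=> zr; have ise : is_edge e [set par z; z].
  apply/existsP; exists (par z); apply/existsP; exists z; by rewrite e_par // eqxx.
by rewrite val_insubd ise.
Qed.

Lemma set2_par z w : z != rt -> w != rt -> [set par z; z] = [set par w; w] -> z = w.
Proof.
move=> zr wr E.
have : z \in [set par w; w] by rewrite -E !inE eqxx orbT.
rewrite !inE => /orP [/eqP zw|/eqP //].
have : w \in [set par z; z] by rewrite E !inE eqxx orbT.
rewrite !inE => /orP [/eqP wz|/eqP //].
have := dep_par z; have := dep_par w; rewrite -zw -wz.
have := dep_gt0 zr; have := dep_gt0 wr; lia.
Qed.

Definition child (f : edge_t e) : T :=
  odflt rt [pick z in val f | (par z \in val f) && (z != rt)].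

Lemma edge_form (f : edge_t e) : exists2 z, z != rt & val f = [set par z; z].
Proof.
case: f => A /= /existsP [a /existsP [b /andP [eab /eqP ->]]].
case: (e_cases eab) => [[br ->]|[ar ->]]; first by exists b.
by exists a => //; rewrite setUC.
Qed.

Lemma child_spec f : child f != rt /\ val f = [set par (child f); child f].
Proof.
have [z zr Ef] := edge_form f; rewrite /child.
case: pickP => [c /andP [cf /andP [pcf cr]] | none] /=; last first.
  by move: (none z); rewrite Ef !inE !eqxx orbT /= zr.
suff -> : c = z by [].
move: cf pcf; rewrite Ef !inE => /orP [/eqP cz|/eqP //].
rewrite cz in cr * => /orP [/eqP E|/eqP E].
  by move: (par_neq cr); rewrite E eqxx.
have := dep_par (par z); rewrite E dep_par; have := dep_gt0 zr; lia.
Qed.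

Lemma child_ne f : child f != rt. Proof. by case: (child_spec f). Qed.

Lemma eps_child f : eps (child f) = f.
Proof. by apply: val_inj; rewrite eps_val ?child_ne //; case: (child_spec f). Qed.

Lemma child_eps z : z != rt -> child (eps z) = z.
Proof.
move=> zr; case: (child_spec (eps z)) => cr; rewrite eps_val // => E.
exact: (esym (set2_par zr cr E)).
Qed.

Local Notation adj := (@edge_adj T e).

Lemma adj_share (f g : edge_t e) z : z \in val f -> z \in val g -> adj f g.
Proof. by move=> zf zg; apply/set0Pn; exists z; rewrite inE zf zg. Qed.

Lemma adj_cases x y : x != rt -> y != rt -> adj (eps x) (eps y) ->
  [\/ par x = par y, par x = y, x = par y | x = y].
Proof.
move=> xr yr; rewrite /edge_adj !eps_val // => /set0Pn [z].
rewrite !inE => /andP [/orP [] /eqP -> /orP [] /eqP E].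
- by constructor 1.
- by constructor 2.
- by constructor 3.
- by constructor 4.
Qed.

Lemma adj_sym : symmetric adj.
Proof. by move=> f g; rewrite /edge_adj setIC. Qed.

Definition cst i j := i + j - minn (minn i j) 1.
Definition Wit' n x y := exists i j, iter i par x = iter j par y /\ cst i j <= n.
Definition WE n (f g : edge_t e) := exists q, [&& path adj f q, last f q == g & size q <= n].

Lemma WE_Wit n f g : WE n f g -> Wit' n (child f) (child g).
Proof.
rewrite /cst; case=> q; elim: q f n => [|h q IH] f n /and3P [pq /eqP lq sq].
  by exists 0, 0; rewrite /= -lq.
move: pq lq => /= /andP [afh pq] lq; move: sq => /= sq.
have [i [j [E ij]]] : Wit' n.-1 (child h) (child g).
  by apply: IH; rewrite pq lq eqxx /=; lia.
move: afh ij; rewrite /cst -{1}(eps_child f) -{1}(eps_child h).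
case/(adj_cases (child_ne _) (child_ne _)) => H ij.
- case: i E ij => [|i] E ij.
    exists 1, j.+1; split; last (rewrite /cst; lia).
    by rewrite /= H; move: E => /= ->.
  by exists i.+1, j; split; [rewrite iterSr H -iterSr|rewrite /cst; lia].
- by exists i.+1, j; split; [rewrite iterSr H|rewrite /cst; lia].
- case: i E ij => [|i] E ij.
    exists 0, j.+1; split; last (rewrite /cst; lia).
    by rewrite /= H; move: E => /= ->.
  by exists i, j; split; [rewrite H -iterSr|rewrite /cst; lia].
- by exists i, j; split; [rewrite H|rewrite /cst; lia].
Qed.

Lemma WE_trans m n a b c : WE m a b -> WE n b c -> WE (m + n) a c.
Proof.
case=> q1 /and3P [p1 /eqP l1 s1] [q2 /and3P [p2 /eqP l2 s2]].
exists (q1 ++ q2); rewrite cat_path p1 l1 p2 last_cat l1 l2 eqxx size_cat /=; lia.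
Qed.
Lemma WE_mono m n a b : m <= n -> WE m a b -> WE n a b.
Proof. by move=> mn [q /and3P [p l sq]]; exists q; rewrite p l /=; lia. Qed.
Lemma WE1 a b : adj a b -> WE 1 a b.
Proof. by move=> eab; exists [:: b]; rewrite /= eab eqxx. Qed.
Lemma WE0 a : WE 0 a a.
Proof. by exists [::]; rewrite /= eqxx. Qed.
Lemma WE_sym n a b : WE n a b -> WE n b a.
Proof.
case=> q /and3P [pq /eqP lq sq]; rewrite -lq; apply: WE_mono sq _.
elim: q a {lq} pq => [|c q IH] a /=; first by move=> _; apply: WE0.
case/andP => eac pq; rewrite -addn1; apply: WE_trans (IH _ pq) _.
by apply: WE1; rewrite adj_sym.
Qed.

Lemma WE_up i x : i < dep x -> WE i (eps x) (eps (iter i par x)).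
Proof.
elim: i => [|i IH] h; first exact: WE0.
apply: (@WE_mono (i + 1)); first lia.
apply: WE_trans (IH (ltnW h)) _; apply: WE1.
have r1 : iter i par x != rt by rewrite iter_rt; lia.
have r2 : iter i.+1 par x != rt by rewrite iter_rt; lia.
apply: (@adj_share _ _ (iter i.+1 par x)).
  by rewrite eps_val // !inE eqxx.
by rewrite eps_val // !inE eqxx orbT.
Qed.

Lemma cst_mono i j i' j' : i' <= i -> j' <= j -> cst i' j' <= cst i j.
Proof. rewrite /cst; lia. Qed.

Lemma Wit'_WE n x y : x != rt -> y != rt -> Wit' n x y -> WE n (eps x) (eps y).
Proof.
move=> xr yr [i [j [E ij]]]; have [i' [j' [h1 h2 h3 h4 E']]] := norm_wit E.
have c' := leq_trans (cst_mono h1 h2) ij; apply: WE_mono c' _ => {E ij h1 h2 i j}.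
case: i' j' h3 h4 E' => [|i] [|j] h3 h4 E'.
- by move: E' => /= ->; apply: WE0.
- have r1 : iter j par y != rt by rewrite iter_rt; lia.
  apply: (@WE_mono (j + 1)); first by rewrite /cst; lia.
  apply: WE_sym; apply: WE_trans (WE_up _) (WE1 _); first lia.
  apply: (@adj_share _ _ x); first by move: E' => /= ->; rewrite eps_val // !inE eqxx.
  by rewrite eps_val // !inE eqxx orbT.
- have r1 : iter i par x != rt by rewrite iter_rt; lia.
  apply: (@WE_mono (i + 1)); first by rewrite /cst; lia.
  apply: WE_trans (WE_up _) (WE1 _); first lia.
  apply: (@adj_share _ _ y); first by rewrite eps_val // -iterS E' !inE eqxx.
  by rewrite eps_val // !inE eqxx orbT.
- have r1 : iter i par x != rt by rewrite iter_rt; lia.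
  have r2 : iter j par y != rt by rewrite iter_rt; lia.
  apply: (@WE_mono (i + 1 + j)); first by rewrite /cst; lia.
  apply: WE_trans (WE_trans (WE_up _) (WE1 _)) (WE_sym (WE_up _)); try lia.
  apply: (@adj_share _ _ (iter i.+1 par x)); first by rewrite eps_val // !inE eqxx.
  by rewrite eps_val // E' !inE eqxx.
Qed.

Definition nearE (s : nat) : rel (edge_t e) := fun f g =>
  [exists i : 'I_s.+1, exists j : 'I_s.+1,
    (cst i j <= s.-1) && (iter i par (child f) == iter j par (child g))].

Lemma nearEP s f g : reflect (Wit' s.-1 (child f) (child g)) (nearE s f g).
Proof.
apply: (iffP existsP) => [[i /existsP [j /andP [h /eqP E]]]|[i [j [E h]]]].
  by exists i, j.
have hi : i < s.+1 by move: h; rewrite /cst; lia.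
have hj : j < s.+1 by move: h; rewrite /cst; lia.
by exists (Ordinal hi); apply/existsP; exists (Ordinal hj); rewrite /= h E eqxx.
Qed.

Lemma nearE_sym s : symmetric (nearE s).
Proof.
move=> a b; apply/nearEP/nearEP => -[i [j [E h]]]; exists j, i; split => //;
  move: h; rewrite /cst; lia.
Qed.

Lemma scatE s A : 1 <= s -> scattered adj s A <-> indep (nearE s) A.
Proof.
move=> hs; split => H.
- apply/indepP => a b aA bA ab; apply/negP => /nearEP.
  move/(Wit'_WE (child_ne _) (child_ne _)); rewrite !eps_child.
  case=> q /and3P [pq /eqP lq sq].
  have := H a b aA bA ab q pq lq; move/leq_trans/(_ sq); case: (s) hs => // s' _; by rewrite /= ltnn.
- move=> a b aA bA ab q pq lq; rewrite leqNgt; apply/negP => sq.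
  move/indepP: H => /(_ a b aA bA ab) /nearEP; apply; apply: WE_Wit.
  by exists q; rewrite pq lq eqxx /= -ltnS (prednK hs).
Qed.


Definition dprefix (S : {set T}) := forall a b, a \in S -> dep b < dep a -> b \in S.
Definition ES (S : {set T}) := [set f : edge_t e | child f \in S].

Lemma wnorm s v w : nearV s v w -> exists i j,
  [/\ i + j <= s, i <= dep v, j <= dep w, iter i par v = iter j par w
    & dep v - i = dep w - j].
Proof.
case/nearVP => i [j [E h]]; have [i' [j' [h1 h2 h3 h4 E']]] := norm_wit E.
exists i', j'; split => //; first lia.
by rewrite -!dep_iter E'.
Qed.

Lemma wnormE n v w : Wit' n v w -> exists i j,
  [/\ cst i j <= n, i <= dep v, j <= dep w, iter i par v = iter j par w
    & dep v - i = dep w - j].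
Proof.
case=> i [j [E h]]; have [i' [j' [h1 h2 h3 h4 E']]] := norm_wit E.
exists i', j'; split => //; first exact: leq_trans (cst_mono h1 h2) h.
by rewrite -!dep_iter E'.
Qed.

Lemma iter_shift v y z i1 j1 i2 j2 : i2 <= i1 ->
  iter i1 par v = iter j1 par y -> iter i2 par v = iter j2 par z ->
  iter j1 par y = iter (i1 - i2 + j2) par z.
Proof. by move=> h E1 E2; rewrite iterD -E2 -iterD subnK // E1. Qed.

Lemma cliqueV s (S : {set T}) v : (forall w, w \in S -> dep w <= dep v) ->
  forall y z, y \in [set w in S | nearV s v w] -> z \in [set w in S | nearV s v w] ->
  y != z -> nearV s y z.
Proof.
move=> hd y z; rewrite !inE => /andP [yS ny] /andP [zS nz] _.
have [i1 [j1 [s1 a1 b1 E1 d1]]] := wnorm ny.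
have [i2 [j2 [s2 a2 b2 E2 d2]]] := wnorm nz.
have := hd _ yS; have := hd _ zS => hz hy.
case: (leqP i2 i1) => h.
  apply/nearVP; exists j1, (i1 - i2 + j2); split; last lia.
  exact: iter_shift E1 E2.
rewrite nearV_sym; apply/nearVP; exists j2, (i2 - i1 + j1); split; last lia.
apply: iter_shift E2 E1; lia.
Qed.

Lemma cstE_arith s i1 j1 i2 j2 : i2 <= i1 -> j1 <= i1 -> j2 <= i2 ->
  cst i1 j1 <= s.-1 -> cst i2 j2 <= s.-1 -> cst j1 (i1 - i2 + j2) <= s.-1.
Proof. rewrite /cst; case: j1 => [|j1]; case: j2 => [|j2]; case: s => [|s] /=; lia. Qed.

Lemma cliqueE s (S : {set T}) v : (forall w, w \in S -> dep w <= dep v) ->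
  forall y z, y \in [set f in ES S | nearE s (eps v) f] ->
  z \in [set f in ES S | nearE s (eps v) f] -> y != z -> nearE s y z.
Proof.
move=> hd y z; rewrite !inE => /andP [yS /nearEP ny] /andP [zS /nearEP nz] _.
have vr : v != rt.
  apply/negP => /eqP vr; move: (child_ne y) (hd _ yS); rewrite vr dep_rt leqn0.
  by move=> yr /eqP/dep0 E; rewrite E eqxx in yr.
move: ny nz; rewrite !child_eps // => ny nz.
have [i1 [j1 [s1 a1 b1 E1 d1]]] := wnormE ny.
have [i2 [j2 [s2 a2 b2 E2 d2]]] := wnormE nz.
have hy := hd _ yS; have hz := hd _ zS.
have h1 : j1 <= i1 by lia.
have h2 : j2 <= i2 by lia.
case: (leqP i2 i1) => h.
  apply/nearEP; exists j1, (i1 - i2 + j2); split; last exact: cstE_arith.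
  exact: iter_shift E1 E2.
rewrite nearE_sym; apply/nearEP; exists j2, (i2 - i1 + j1); split.
  apply: iter_shift E2 E1; lia.
apply: cstE_arith => //; lia.
Qed.

Lemma cardN s (S : {set T}) v : 1 <= s -> v != rt -> v \notin S ->
  dprefix (v |: S) -> (forall w, w \in S -> dep w <= dep v) ->
  #|[set w in S | nearV s v w]| = #|[set f in ES S | nearE s (eps v) f]|.+1.
Proof.
move=> hs vr vS dS hd.
have dv := dep_gt0 vr.
pose m := minn s (dep v).
have hm1 : m <= s by rewrite /m geq_minl.
have hm2 : m <= dep v by rewrite /m geq_minr.
have hm3 : m = s \/ m = dep v.
  rewrite /m; case: (leqP s (dep v)) => h; [left|right]; lia.
pose a := iter m par v.
have da : dep a = dep v - m by rewrite dep_iter.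
have aS : a \in S.
  have : a \in v |: S by apply: (dS v); rewrite ?setU11 // da; lia.
  by case/setU1P => // av; move: da; rewrite av; lia.
have nEP w : w != rt -> nearE s (eps v) (eps w) -> Wit' s.-1 v w.
  by move=> wr /nearEP; rewrite !child_eps.
have nEP' w : w != rt -> Wit' s.-1 v w -> nearE s (eps v) (eps w).
  by move=> wr h; apply/nearEP; rewrite !child_eps.
pose NV' := [set w in S | (w != rt) && nearE s (eps v) (eps w)].
have E1 : [set w in S | nearV s v w] = a |: NV'.
  apply/setP => w; rewrite !inE.
  apply/andP/orP => [[wS nw]|[/eqP ->|/and3P [wS wr nw]]].
  - case: (w =P a) => [->|/eqP wa]; [by left|right].
    have [i [j [sij ai bj E d]]] := wnorm nw.
    have wr : w != rt.
      apply/negP => /eqP wr; move: E; rewrite wr => E.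
      have : iter i par v == rt by rewrite E iter_rt dep_rt.
      rewrite iter_rt => hi.
      have : a == rt by rewrite /a iter_rt; lia.
      by rewrite -wr eq_sym (negbTE wa).
    rewrite wS wr /=; apply: (nEP' _ wr); exists i, j; split => //.
    have ij : ~ (j = 0 /\ i = s).
      case=> j0 i_s; move/eqP: wa; apply; move: E; rewrite j0 i_s /= => <-.
      by rewrite /a; congr iter; lia.
    have ji : j <= i by have := hd _ wS; lia.
    rewrite /cst; case: j {bj E d} ij sij ji => [|j] ij sij ji.
      have ins : i <> s by move=> h; apply: ij.
      clear ij; lia.
    clear ij; lia.
  - split => //; apply/nearVP; exists m, 0; split => //; lia.
  - split => //; apply/nearVP; have [i [j [E h]]] := nEP _ wr nw.
    by exists i, j; split => //; move: h; rewrite /cst; lia.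
have aN : a \notin NV'.
  rewrite inE; apply/negP => /and3P [_ ar /(nEP _ ar) na].
  have hma : m < dep v by move: ar; rewrite /a iter_rt; lia.
  have ms : m = s by lia.
  have [i [j [c hi hj E d]]] := wnormE na.
  move: c; rewrite /cst; case: j hj d {E} => [|j] hj d /=; lia.
have E2 : [set f in ES S | nearE s (eps v) f] = eps @: NV'.
  apply/setP => f; rewrite inE; apply/andP/imsetP => [[fS nf]|[w wN ->]].
    exists (child f); rewrite ?eps_child //.
    by rewrite inE in fS; rewrite !inE fS child_ne eps_child nf.
  move: wN; rewrite !inE => /and3P [wS wr nw].
  by rewrite child_eps // wS nw.
rewrite E1 E2 cardsU1 aN card_in_imset //.
move=> w1 w2; rewrite !inE => /and3P [_ r1 _] /and3P [_ r2 _] E.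
by rewrite -(child_eps r1) E child_eps.
Qed.


Lemma main_ind s : 1 <= s -> forall n (S : {set T}), #|S| = n -> rt \in S -> dprefix S ->
  forall k, #|parts (nearV s) S k.+1| = #|parts (nearE s) (ES S) k|.
Proof.
move=> hs; elim=> [|n IH] S cS rS dS k.
  by move: cS; rewrite (cardsD1 rt) rS.
case: (S =P [set rt]) => [SE|/eqP Sn].
  have ES0 : ES S = set0.
    by apply/setP => f; rewrite !inE SE inE (negbTE (child_ne f)).
  rewrite ES0 parts_set0 SE -(setU0 [set rt]).
  rewrite (count_step (@nearV_sym s)) ?inE // ?parts_set0 ?muln0 ?addn0 //.
  by move=> y z; rewrite !inE.
have [v vS vmax] := @arg_maxnP _ rt (fun w => w \in S) dep rS.
have vr : v != rt.
  apply: contra Sn => /eqP vr; apply/eqP/setP => w; rewrite inE.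
  apply/idP/eqP => [wS|->//]; apply: dep0; have := vmax w wS; rewrite vr dep_rt; lia.
set S' := S :\ v.
have cS' : #|S'| = n by move: cS; rewrite (cardsD1 v) vS => -[].
have rS' : rt \in S' by rewrite !inE rS eq_sym vr.
have vS' : v \notin S' by rewrite !inE eqxx.
have hd : forall w, w \in S' -> dep w <= dep v by move=> w /setD1P [_ /vmax].
have dS' : dprefix S'.
  move=> a b /setD1P [av aS] hb; apply/setD1P; split; last exact: dS aS hb.
  by apply/eqP => bv; move: (vmax a aS); rewrite -bv; lia.
have SE : S = v |: S' by rewrite setD1K.
have dS2 : dprefix (v |: S') by rewrite -SE.
have ESE : ES S = eps v |: ES S'.
  apply/setP => f; rewrite !inE; case: (f =P eps v) => [->|/eqP fv] /=.
    by rewrite child_eps.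
  have -> // : child f != v by apply: contra fv => /eqP <-; rewrite eps_child.
have evS : eps v \notin ES S' by rewrite inE child_eps.
rewrite ESE SE (count_step (@nearV_sym s) k vS' (cliqueV hd)).
case: k => [|k].
  rewrite parts0; last by apply/set0Pn; exists rt.
  rewrite parts0; last by apply/set0Pn; exists (eps v); rewrite setU11.
  by rewrite (cardN hs vr vS' dS2 hd).
rewrite (count_step (@nearE_sym s) k evS (cliqueE hd)).
by rewrite !IH // (cardN hs vr vS' dS2 hd) subSS.
Qed.

End Tree.

Lemma sig_eq (A : Type) (P : A -> Prop) (u v : {x | P x}) :
  proj1_sig u = proj1_sig v -> u = v.
Proof. case: u v => x hx [y hy] /= E; subst y; by rewrite (proof_irrelevance _ hx hy). Qed.

Lemma sig_bij (A B : finType) (PA : A -> Prop) (PB : B -> Prop)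
    (SA : {set A}) (SB : {set B}) :
  (forall a, PA a <-> a \in SA) -> (forall b, PB b <-> b \in SB) -> #|SA| = #|SB| ->
  exists f : {a | PA a} -> {b | PB b}, bijective f.
Proof.
move=> hA hB E.
pose f (u : {a | PA a}) : {b | PB b} :=
  let: exist a ha := u in
  exist _ (enum_val (cast_ord E (enum_rank_in (proj1 (hA a) ha) a))) (proj2 (hB _) (enum_valP _)).
pose g (u : {b | PB b}) : {a | PA a} :=
  let: exist b hb := u in
  exist _ (enum_val (cast_ord (esym E) (enum_rank_in (proj1 (hB b) hb) b)))
    (proj2 (hA _) (enum_valP _)).
exists f; exists g.
- case=> a ha; apply: sig_eq => /=.
  by rewrite enum_valK_in cast_ordK enum_rankK_in //; exact: (proj1 (hA a) ha).
- case=> b hb; apply: sig_eq => /=.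
  by rewrite enum_valK_in cast_ordKV enum_rankK_in //; exact: (proj1 (hB b) hb).
Qed.

Unset Implicit Arguments.
Set Strict Implicit.

Theorem corollary3p7 (T : finType) (e : rel T) (hT : is_tree e)
    (hedge : exists x y : T, e x y) (r s : nat) (hr : 1 <= r) (hs : 1 <= s) :
  exists f : {P : {set {set T}} | @vpart T e r.+1 s.+1 P} ->
             {Q : {set {set edge_t e}} | @epart T e r s Q},
    bijective f.
Proof.
case: hedge => x0 [y0 exy].
have ise : is_edge e [set x0; y0].
  by apply/existsP; exists x0; apply/existsP; exists y0; rewrite exy eqxx.
pose f0 : edge_t e := exist (fun A => is_edge e A) [set x0; y0] ise.
apply: (@sig_bij _ _ _ _ (parts (nearV hT x0 s) setT r.+1) (parts (nearE hT x0 s) setT r)).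
- move=> P; split.
    case=> a b c; apply/partsP; split => // B /c; exact: (proj1 (scatV hT x0 s B)).
  case/partsP => a b c; split => // B /c; exact: (proj2 (scatV hT x0 s B)).
- move=> Q; split.
    case=> a b c; apply/partsP; split => // B /c; exact: (proj1 (scatE hT x0 f0 B hs)).
  case/partsP => a b c; split => // B /c; exact: (proj2 (scatE hT x0 f0 B hs)).
- have -> : [set: edge_t e] = ES hT x0 setT by apply/setP => f; rewrite !inE.
  apply: (main_ind f0 hs (erefl _)); first by rewrite inE.
  by move=> a b; rewrite !inE.
Qed.
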